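(* Let $\{G_i\}$ be a family of connected graphs with common induced subgraph $J$, embedded as $J_i\subseteq G_i$, such that $\{(G_i|J_i)\}$ is isometric, and let $H=\amalg\{(G_i|J_i)\}$. Suppose $\dim_l(H)=\sum_i\dim_l(G_i)$. If, for each $k$, $B_k$ is a local metric basis for $G_k$ (viewed as a subset of $V(H)$), then $B_i\cap B_j=\emptyset$ for all $i\neq j$.
   Context: $d_G$ is shortest-path distance in $G$. A vertex $w$ distinguishes an edge $uv$ of $G$ if $d_G(w,u)\neq d_G(w,v)$. A local metric set of $G$ is a set of vertices such that every edge is distinguished by one of them; a local metric basis is one of minimum cardinality, and $\dim_l(G)$ is that cardinality. $J$ is a common induced subgraph of each $G_i$ via injective maps $\iota_i:V(J)\to V(G_i)$ with $\iota_i(x)\iota_i(y)\in E(G_i)$ iff $xy\in E(J)$; $J_i$ is the induced image, $x^i=\iota_i(x)$. $H=\amalg\{(G_i|J_i)\}$ is obtained from the disjoint union of the $G_i$ by identifying, for each $x\in V(J)$, all $x^i$ into one vertex; each $G_i$ is regarded as a subgraph of $H$ (so distinct $G_i$, $G_j$ share exactly the vertices of $J$). The family is isometric if $d_{G_i}(a^i,b^i)=d_{G_j}(a^j,b^j)$ for all $i,j$ and $a,b\in V(J)$. *)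

(* Defs.v *)
From mathcomp Require Import all_boot.
Set Implicit Arguments. Unset Strict Implicit. Unset Printing Implicit Defensive.

Section Graphs.
Variable T : finType.
Implicit Types (e : rel T).

Fixpoint within e (n : nat) (x y : T) : bool :=
  if n is n'.+1 then (x == y) || [exists z, e x z && within e n' z y]
  else x == y.

(* shortest-path distance; for unreachable pairs it is #|T| (acts as infinity,
   since reachable pairs are at distance < #|T|) *)
Definition dist e (x y : T) : nat := find (fun n => within e n x y) (iota 0 #|T|).

Definition simple_graph e := irreflexive e /\ symmetric e.
Definition connected_graph e := forall x y : T, connect e x y.

Definition distinguishes e (w u v : T) := dist e w u != dist e w v.

Definition local_metric_set e (S : {set T}) :=
  [forall u, forall v, e u v ==> [exists w in S, distinguishes e w u v]].

(* dim_l: minimum cardinality of a local metric set (setT always is one) *)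
Definition local_metric_dim e : nat :=
  \big[minn/#|T|]_(S : {set T} | local_metric_set e S) #|S|.

Definition local_metric_basis e (B : {set T}) :=
  local_metric_set e B && (#|B| == local_metric_dim e).
End Graphs.

Section Amalgam.
Variables (I : finType) (V : I -> finType) (VJ : finType)
          (phi : forall i, VJ -> V i).

(* vertices of H: the vertices of J, plus for each i the vertices of G_i
   outside J_i *)
Definition amalg_vertex : finType :=
  (VJ + {i : I & {v : V i | v \notin codom (phi i)}})%type.

(* canonical embedding of V(G_i) into V(H): x^i |-> x, other v |-> (i, v) *)
Definition amalg_emb (i : I) (v : V i) : amalg_vertex :=
  match (v \in codom (phi i)) as b return (v \in codom (phi i)) = b -> amalg_vertex with
  | true => fun h => inl (iinv h)
  | false => fun h => inr (Tagged (fun j => {v : V j | v \notin codom (phi j)}) (exist _ v (negbT h)))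
  end erefl.

Variable G : forall i, rel (V i).

Definition amalg_rel : rel amalg_vertex := fun u w =>
  [exists i, [exists a : V i, [exists b : V i,
     [&& G a b, amalg_emb a == u & amalg_emb b == w]]]].
End Amalgam.

(* Main.v *)
Require Import Defs.
From mathcomp Require Import all_boot.
From mathcomp Require Import zify.
Set Implicit Arguments. Unset Strict Implicit. Unset Printing Implicit Defensive.

Lemma find_le (T : Type) (x0 : T) (a : pred T) s i :
  i < size s -> a (nth x0 s i) -> find a s <= i.
Proof.
elim: s i => [|x s IH] [|i] //= lt h; first by rewrite h.
by case: (a x) => //; rewrite ltnS; apply: IH.
Qed.

Lemma dist_le (T : finType) (e : rel T) n x y : within e n x y -> dist e x y <= n.
Proof.
move=> w; rewrite /dist.
have [lt|ge] := ltnP n #|T|.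
  by apply: (@find_le _ 0); rewrite ?size_iota ?nth_iota.
by apply: leq_trans ge; have := find_size (fun m => within e m x y) (iota 0 #|T|); rewrite size_iota.
Qed.

Lemma within_path (T : finType) (e : rel T) x p : path e x p -> within e (size p) x (last x p).
Proof.
elim: p x => [|z p IH] x /=; first by rewrite eqxx.
case/andP=> exz pz; apply/orP; right; apply/existsP; exists z; rewrite exz /=.
exact: IH.
Qed.

Lemma dist_within (T : finType) (e : rel T) x y : connect e x y -> within e (dist e x y) x y.
Proof.
case/connectP=> p pp ->; case: (shortenP pp) => p' pp' up' _.
have hs : size p' < #|T|.
  by move/card_uniqP: up' => /= <-; apply: max_card.
have hh : has (fun m => within e m x (last x p')) (iota 0 #|T|).
  by apply/hasP; exists (size p'); [rewrite mem_iota | apply: within_path].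
have := nth_find 0 hh; rewrite /dist nth_iota ?add0n //.
by have := hh; rewrite has_find size_iota.
Qed.

Lemma dist_edge (T : finType) (e : rel T) a b z :
  (forall x y, connect e x y) -> e a b -> dist e a z <= (dist e b z).+1.
Proof.
move=> c eab; apply: dist_le => /=; apply/orP; right; apply/existsP; exists b.
by rewrite eab dist_within.
Qed.

Lemma dist_refl (T : finType) (e : rel T) x : dist e x x = 0.
Proof. by apply/eqP; rewrite -leqn0; apply: dist_le; rewrite /= eqxx. Qed.

Lemma within_S (T : finType) (e : rel T) n x y : within e n x y -> within e n.+1 x y.
Proof.
elim: n x => [|n IH] x /=; first by move=> ->.
case/orP=> [-> //|/existsP[w /andP[exw wwy]]].
by apply/orP; right; apply/existsP; exists w; rewrite exw; apply: IH.
Qed.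

Lemma within_leq (T : finType) (e : rel T) n m x y :
  n <= m -> within e n x y -> within e m x y.
Proof.
move=> /subnK <- h; elim: (m - n) => [|k IH] //; rewrite addSn; apply: within_S; exact: IH.
Qed.

Lemma within_cat (T : finType) (e : rel T) n m x y z :
  within e n x y -> within e m y z -> within e (n + m) x z.
Proof.
elim: n x => [|n IH] x; first by move/eqP->.
move=> /= /orP[/eqP-> | /existsP[w /andP[exw wwy]]] wyz.
  by apply: (@within_leq _ _ m (n.+1 + m)); rewrite ?leq_addl.
apply/orP; right; apply/existsP; exists w; rewrite exw; exact: IH.
Qed.

Lemma dist_tri (T : finType) (e : rel T) x y z :
  (forall x y, connect e x y) -> dist e x z <= dist e x y + dist e y z.
Proof.
by move=> c; apply: dist_le; apply: within_cat; apply: dist_within.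
Qed.


Lemma emb_in (I : finType) (V : I -> finType) (VJ : finType) (phi : forall i, VJ -> V i)
  k (v : V k) (h : v \in codom (phi k)) :
  @amalg_emb I V VJ phi k v = inl (iinv h).
Proof.
rewrite /amalg_emb.
generalize (@erefl _ (v \in codom (phi k))).
case: {2 3}(v \in codom (phi k)) => e.
  by rewrite (bool_irrelevance e h).
by exfalso; move: h; rewrite e.
Qed.

Lemma emb_notin (I : finType) (V : I -> finType) (VJ : finType) (phi : forall i, VJ -> V i)
  k (v : V k) (h : v \notin codom (phi k)) :
  @amalg_emb I V VJ phi k v =
      inr (Tagged (fun j => {v : V j | v \notin codom (phi j)}) (exist _ v h)).
Proof.
rewrite /amalg_emb.
generalize (@erefl _ (v \in codom (phi k))).
case: {2 3}(v \in codom (phi k)) => e.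
  by exfalso; move: h; rewrite e.
by rewrite (bool_irrelevance (negbT e) h).
Qed.

Section S.
Context (I : finType) (V : I -> finType) (VJ : finType) (phi : forall i, VJ -> V i).
Lemma emb_phi (phiI : forall i, injective (phi i)) k j :
  @amalg_emb I V VJ phi k (phi k j) = inl j.
Proof. by rewrite (emb_in (codom_f (phi k) j)) (iinv_f (phiI k)). Qed.

Lemma emb_inj k : injective (@amalg_emb I V VJ phi k).
Proof.
move=> v v'.
case: (boolP (v \in codom (phi k))) => h; case: (boolP (v' \in codom (phi k))) => h'.
- by rewrite (emb_in h) (emb_in h') => -[e]; rewrite -(f_iinv h) -(f_iinv h') e.
- by rewrite (emb_in h) (emb_notin h').
- by rewrite (emb_notin h) (emb_in h').
rewrite (emb_notin h) (emb_notin h') => -[].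
move/(congr1 (tagged_as (Tagged V v))).
by rewrite !tagged_asE.
Qed.

Lemma emb_J k k' (v : V k) (v' : V k') : k != k' ->
  @amalg_emb I V VJ phi k v = @amalg_emb I V VJ phi k' v' ->
  exists j, v = phi k j /\ v' = phi k' j.
Proof.
move=> nk.
case: (boolP (v \in codom (phi k))) => h; case: (boolP (v' \in codom (phi k'))) => h'.
- by rewrite (emb_in h) (emb_in h') => -[e]; exists (iinv h); rewrite f_iinv e f_iinv.
- by rewrite (emb_in h) (emb_notin h').
- by rewrite (emb_notin h) (emb_in h').
rewrite (emb_notin h) (emb_notin h') => -[] e _.
by rewrite e eqxx in nk.
Qed.
End S.

Set Implicit Arguments.

Lemma bigmin_le (T : finType) (P : pred T) (F : T -> nat) N x :
  P x -> \big[minn/N]_(y | P y) F y <= F x.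
Proof.
move=> Px; rewrite unlock /reducebig.
have : x \in index_enum T by rewrite mem_index_enum.
elim: (index_enum T) => [|z r IH] //=; rewrite inE => /orP[/eqP<-|xr].
  by rewrite Px geq_minl.
by case: (P z); rewrite ?(leq_trans (geq_minr _ _)) // IH.
Qed.

Lemma bigmin_leN (T : finType) (P : pred T) (F : T -> nat) N :
  \big[minn/N]_(y | P y) F y <= N.
Proof.
rewrite unlock /reducebig; elim: (index_enum T) => [|z r IH] //=.
by case: (P z); rewrite ?(leq_trans (geq_minr _ _)).
Qed.

Lemma leq_bigmin1 (T : finType) (P : pred T) (F : T -> nat) N m c :
  m <= N + c -> (forall x, P x -> m <= F x + c) -> m <= \big[minn/N]_(y | P y) F y + c.
Proof.
move=> hN hF; elim/big_ind: _ => // a b ha hb.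
by rewrite addn_minl leq_min ha hb.
Qed.

Lemma leq_bigmin (T : finType) (P : pred T) (F : T -> nat) N m :
  m <= N -> (forall x, P x -> m <= F x) -> m <= \big[minn/N]_(y | P y) F y.
Proof.
move=> hN hF; rewrite -[X in _ <= X]addn0; apply: leq_bigmin1; rewrite ?addn0 //.
by move=> x /hF; rewrite addn0.
Qed.

Lemma within_connect (T : finType) (e : rel T) n x y : within e n x y -> connect e x y.
Proof.
elim: n x => [|n IH] x /=; first by move/eqP->.
case/orP=> [/eqP-> //|/existsP[w /andP[exw wwy]]].
by apply: connect_trans (IH _ wwy); apply: connect1.
Qed.

Lemma dist_leT (T : finType) (e : rel T) x y : dist e x y <= #|T|.
Proof. by have := find_size (fun m => within e m x y) (iota 0 #|T|); rewrite size_iota. Qed.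

Unset Implicit Arguments.
Section Iso.
Context (I : finType) (V : I -> finType) (G : forall i, rel (V i))
  (VJ : finType) (phi : forall i, VJ -> V i)
  (Gc : forall i, connected_graph (G i))
  (phiI : forall i, injective (phi i))
  (iso : forall i j (a b : VJ),
      dist (G i) (phi i a) (phi i b) = dist (G j) (phi j a) (phi j b)).

Let H := @amalg_rel I V VJ phi G.
Let emb := @amalg_emb I V VJ phi.

Lemma within_emb k n u w : within (G k) n u w -> within H n (emb k u) (emb k w).
Proof.
elim: n u => [|n IH] u /=; first by move/eqP->.
case/orP=> [/eqP-> |/existsP[z /andP[uz zw]]]; first by rewrite eqxx.
apply/orP; right; apply/existsP; exists (emb k z); rewrite IH // andbT.
by apply/existsP; exists k; apply/existsP; exists u; apply/existsP; exists z; rewrite uz !eqxx.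
Qed.

Lemma dist_H_le k u w : dist H (emb k u) (emb k w) <= dist (G k) u w.
Proof. by apply: dist_le; apply: within_emb; apply: dist_within; apply: Gc. Qed.

Section Pot.
Variables (i : I) (y : V i).
Let N := #|V i|.
Let E k (v : V k) := \big[minn/N]_(j : VJ) (dist (G k) v (phi k j) + dist (G i) (phi i j) y).
Let Di h := \big[minn/N]_(v : V i | emb i v == h) dist (G i) v y.
Let Do h := \big[minn/N]_(k : I) \big[minn/N]_(v : V k | emb k v == h) E k v.
Let D h := minn (Di h) (Do h).

Lemma E_J k k' j : E k' (phi k' j) = E k (phi k j).
Proof. by apply: eq_bigr => j' _; rewrite (iso k' k). Qed.

Lemma E_lip k a b : G k a b -> E k a <= (E k b).+1.
Proof.
move=> gab; rewrite -addn1; apply: leq_bigmin1.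
  by rewrite (leq_trans (bigmin_leN _ _ _)) ?leq_addr.
move=> j _; apply: leq_trans (bigmin_le _ _ (x:=j) isT) _ => /=.
by rewrite addnAC leq_add2r addn1 (dist_edge _ (Gc k) gab).
Qed.

Lemma D_lower v : dist (G i) v y <= D (emb i v).
Proof.
rewrite leq_min; apply/andP; split; apply: leq_bigmin; rewrite ?dist_leT //.
  by move=> v' /eqP/emb_inj->.
move=> k _; apply: leq_bigmin; rewrite ?dist_leT // => v' /eqP e.
apply: leq_bigmin; rewrite ?dist_leT // => j _.
case: (eqVneq k i) => [ek | nk].
  subst k; move/emb_inj: e => ->; exact: dist_tri (Gc i).
have [j0 [-> ->]] := emb_J nk e.
by rewrite (iso k i); apply: dist_tri (Gc i).
Qed.

Lemma D_y : D (emb i y) = 0.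
Proof.
apply/eqP; rewrite -leqn0; apply: leq_trans (geq_minl _ _) _; rewrite /Di.
by apply: leq_trans (bigmin_le (P := fun v => emb i v == emb i y) _ _ (x:=y) (eqxx _)) _; rewrite dist_refl.
Qed.

Lemma D_leN h : D h <= N.
Proof. by rewrite (leq_trans (geq_minl _ _)) // bigmin_leN. Qed.

Lemma D_Do k a : D (emb k a) <= E k a.
Proof.
apply: leq_trans (geq_minr _ _) _; rewrite /Do.
apply: leq_trans (bigmin_le (P := fun _ => true) _ _ (x:=k) isT) _.
exact: (bigmin_le (P := fun v => emb k v == emb k a) _ _ (x:=a) (eqxx _)).
Qed.

Lemma D_lip k a b : G k a b -> D (emb k a) <= (D (emb k b)).+1.
Proof.
move=> gab; rewrite -addn1 addn_minl leq_min; apply/andP; split.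
  apply: leq_bigmin1; first by rewrite (leq_trans (D_leN _)) ?leq_addr.
  move=> v /eqP e.
  case: (eqVneq k i) => [ek | nk].
    subst k; move/emb_inj: e => ->.
    apply: leq_trans (geq_minl _ _) _; rewrite /Di.
    apply: leq_trans (bigmin_le (P := fun v => emb i v == emb i a) _ _ (x:=a) (eqxx _)) _.
    by rewrite addn1 (dist_edge _ (Gc i) gab).
  have [j [eb ev]] := emb_J nk (esym e).
  apply: leq_trans (D_Do _ _) _; rewrite /E.
  apply: leq_trans (bigmin_le (P := fun _ => true) _ _ (x:=j) isT) _.
  rewrite ev addnC leq_add2l -eb.
  by have := dist_edge b (Gc k) gab; rewrite dist_refl.
apply: leq_bigmin1; first by rewrite (leq_trans (D_leN _)) ?leq_addr.
move=> k' _; apply: leq_bigmin1; first by rewrite (leq_trans (D_leN _)) ?leq_addr.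
move=> v' /eqP e; apply: leq_trans (D_Do _ _) _.
case: (eqVneq k' k) => [ek | nk].
  by subst k'; move/emb_inj: e => ->; rewrite addn1 E_lip.
have [j [-> eb]] := emb_J nk e.
by rewrite (E_J k) -eb addn1 E_lip.
Qed.

Lemma D_within n h : within H n h (emb i y) -> D h <= n.
Proof.
elim: n h => [|n IH] h /=; first by move/eqP->; rewrite D_y.
case/orP=> [/eqP->|/existsP[z /andP[hz zy]]]; first by rewrite D_y.
case/existsP: hz => k /existsP[a /existsP[b /and3P[gab /eqP ea /eqP eb]]].
by rewrite -ea; apply: leq_trans (D_lip _ _ _ gab) _; rewrite ltnS; move: (IH _ zy); rewrite -eb.
Qed.

Lemma dist_H_ge x : dist (G i) x y <= dist H (emb i x) (emb i y).
Proof.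
rewrite (leq_trans (D_lower x)) // D_within // dist_within //.
apply: (@within_connect _ _ (dist (G i) x y)); apply: within_emb.
by apply: dist_within; apply: Gc.
Qed.
End Pot.

Lemma dist_H k u w : dist H (emb k u) (emb k w) = dist (G k) u w.
Proof. by apply/eqP; rewrite eqn_leq dist_H_le dist_H_ge. Qed.
End Iso.

Set Implicit Arguments.

Lemma card_bigcup_le (T I : finType) (P : pred I) (F : I -> {set T}) :
  #|\bigcup_(k | P k) F k| <= \sum_(k | P k) #|F k|.
Proof.
apply: (big_ind2 (fun (A : {set T}) n => #|A| <= n)) => //; first by rewrite cards0.
by move=> A1 n1 A2 n2 h1 h2; rewrite (leq_trans (leq_card_setU _ _)) // leq_add.
Qed.

Theorem lemma5 (I : finType) (V : I -> finType) (G : forall i, rel (V i))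
  (VJ : finType) (eJ : rel VJ) (phi : forall i, VJ -> V i) :
  (forall i, simple_graph (G i)) ->
  (forall i, connected_graph (G i)) ->
  (forall i, injective (phi i)) ->
  (forall i (x y : VJ), G i (phi i x) (phi i y) = eJ x y) ->
  (forall i j (a b : VJ),
      dist (G i) (phi i a) (phi i b) = dist (G j) (phi j a) (phi j b)) ->
  local_metric_dim (@amalg_rel I V VJ phi G) = \sum_(i : I) local_metric_dim (G i) ->
  forall B : forall k, {set V k},
  (forall k, local_metric_basis (G k) (B k)) ->
  forall i j, i != j ->
  [set @amalg_emb I V VJ phi _ x | x in B i] :&: [set @amalg_emb I V VJ phi _ x | x in B j] = set0.
Proof.
move=> Gs Gc phiI Gj iso hdim B hB i j nij.
pose F k : {set amalg_vertex phi} := [set @amalg_emb I V VJ phi _ x | x in B k].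
pose S := \bigcup_k F k.
have lms : local_metric_set (amalg_rel G) S.
  apply/forallP=> u; apply/forallP=> w; apply/implyP.
  case/existsP=> k /existsP[a /existsP[b /and3P[gab /eqP ea /eqP eb]]].
  have /andP[/forallP /(_ a) /forallP /(_ b) /implyP /(_ gab) /existsP[x /andP[xB dx]] _] := hB k.
  apply/existsP; exists (amalg_emb phi x); apply/andP; split.
    by apply/bigcupP; exists k => //; apply: imset_f.
  by rewrite /distinguishes -ea -eb !(@dist_H _ _ _ _ _ Gc iso).
have dle : local_metric_dim (@amalg_rel I V VJ phi G) <= #|S|.
  rewrite /local_metric_dim; exact: (bigmin_le (P := fun S => local_metric_set (amalg_rel G) S) (fun S => #|S|) _ lms).
have sF : \sum_k #|F k| <= \sum_k local_metric_dim (G k).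
  apply: leq_sum => k _; have /andP[_ /eqP <-] := hB k; exact: leq_imset_card.
apply/setP=> x; rewrite !inE; apply/negbTE/negP => /andP[xi xj].
have eS : S = F i :|: \bigcup_(k | k != i) F k by rewrite /S (bigD1 i).
have eF : \sum_k #|F k| = #|F i| + \sum_(k | k != i) #|F k| by rewrite (bigD1 i).
have := leq_trans sF (eq_leq (esym hdim)); move/leq_trans/(_ dle).
rewrite eS cardsU eF.
have hU := card_bigcup_le (fun k => k != i) F.
have hc : 0 < #|F i :&: \bigcup_(k | k != i) F k|.
  apply/card_gt0P; exists x; rewrite inE xi /=.
  by apply/bigcupP; exists j; rewrite // eq_sym.
have hc2 := subset_leq_card (subsetIl (F i) (\bigcup_(k | k != i) F k)).
move: hU hc hc2; lia.
Qed.
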